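(* Let $X=\{x_1,\ldots,x_n\}$ and $y$ be distinct variables, and let $V_n = c_X(\{x_1\},\ldots,\{x_n\},\{y\},\{\neg y\})$, i.e., $c_X$ applied to the formula consisting of the unit clauses $x_1,\ldots,x_n, y, \neg y$, where for a formula $F$ $c_X(F) = \{\gamma \vee \neg a \vee \neg b \mid \gamma \in F\} \cup \{\neg x_i \vee v_i \mid 1\le i\le n\} \cup \{x_i \vee v_i \mid 1\le i\le n\} \cup \{\neg v_1 \vee \cdots \vee \neg v_n \vee a\} \cup \{\neg v_1 \vee \cdots \vee \neg v_n \vee b\}$ with new variables $a,b,v_1,\ldots,v_n$. Then, with branching restricted to $X \cup \{y\}$, the minimum-size DPLL-Mono search trees of $V_n$ have size $2^n - 1$.
   Context: A CNF formula is a finite set of clauses; the empty clause is unsatisfiable. For a partial assignment $I$ (set of literals), $F|I$ is obtained by deleting clauses containing a literal true under $I$ and deleting false literals from remaining clauses. $Var(F)$ is the set of variables of $F$. A binary tree is empty $()$ or a triple $(x~T_1~T_2)$; its size is its number of nodes. $U(F)$ denotes the result of exhaustive unit propagation on $F$. For a set $B$ of variables, a DPLL-Mono search tree (DMST) of $F$ with branching restricted to $B$ is: $()$ if $U(F)$ contains the empty clause; otherwise $(x~T_1~T_2)$ with $x \in B \cap Var(U(F))$, $T_1$ a DMST of $U(F|\{\neg x\})$ and $T_2$ a DMST of $U(F|\{x\})$ (branching restricted to $B$). *)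

(* Defs.v *)
From mathcomp Require Import all_boot.
Set Implicit Arguments. Unset Strict Implicit. Unset Printing Implicit Defensive.

(* Variables are natural numbers; a literal is (polarity, variable):
   (true, v) is v, (false, v) is ~v.  Clauses and formulas are represented
   by sequences (read as finite sets; duplicates/order are irrelevant to
   every notion below). *)
Definition var := nat.
Definition lit := (bool * var)%type.
Definition clause := seq lit.
Definition formula := seq clause.

Definition pos (v : var) : lit := (true, v).
Definition neg (v : var) : lit := (false, v).
Definition lneg (l : lit) : lit := (~~ l.1, l.2).

Definition assign (F : formula) (I : seq lit) : formula :=
  [seq [seq l <- C | lneg l \notin I] | C <- F & ~~ has (fun l => l \in I) C].

Definition vars (F : formula) : seq var := flatten [seq [seq l.2 | l <- C] | C <- F].

Definition unit_lit (F : formula) : option lit :=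
  match [seq C <- F | size C == 1] with
  | [:: l] :: _ => Some l
  | _ => None
  end.

(* Each propagation step deletes at least the
   unit clause used, so [size F] steps always suffice to reach the fixpoint
   (a formula containing the empty clause, or without unit clauses). *)
Fixpoint UP_fuel (k : nat) (F : formula) : formula :=
  match k with
  | 0 => F
  | k'.+1 =>
      if [::] \in F then F
      else match unit_lit F with
           | Some l => UP_fuel k' (assign F [:: l])
           | None => F
           end
  end.

Definition U (F : formula) : formula := UP_fuel (size F) F.

Inductive btree : Type :=
| Leaf : btree
| Node : var -> btree -> btree -> btree.

Fixpoint bt_size (T : btree) : nat :=
  match T with
  | Leaf => 0
  | Node _ T1 T2 => (bt_size T1 + bt_size T2).+1
  end.

Inductive dmst (B : seq var) : formula -> btree -> Prop :=
| dmst_leaf F : [::] \in U F -> dmst B F Leaf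
| dmst_node F x T1 T2 :
    [::] \notin U F -> x \in B -> x \in vars (U F) ->
    dmst B (U (assign (U F) [:: neg x])) T1 ->
    dmst B (U (assign (U F) [:: pos x])) T2 ->
    dmst B F (Node x T1 T2).

Definition cX (xs vs : seq var) (a b : var) (F : formula) : formula :=
  [seq C ++ [:: neg a; neg b] | C <- F]
  ++ [seq [:: neg (nth 0 xs i); pos (nth 0 vs i)] | i <- iota 0 (size xs)]
  ++ [seq [:: pos (nth 0 xs i); pos (nth 0 vs i)] | i <- iota 0 (size xs)]
  ++ [:: rcons [seq neg v | v <- vs] (pos a);
         rcons [seq neg v | v <- vs] (pos b)].

Definition Vn (xs vs : seq var) (y a b : var) : formula :=
  cX xs vs a b ([seq [:: pos x] | x <- xs] ++ [:: [:: pos y]; [:: neg y]]).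

(* Main.v *)
Require Import Defs.
From mathcomp Require Import all_boot.
From mathcomp Require Import zify.
From Stdlib Require Import Lia.
Set Implicit Arguments. Unset Strict Implicit. Unset Printing Implicit Defensive.

Definition lsat (r : var -> option bool) (l : lit) : bool := r l.2 == Some l.1.
Definition assignV (F : formula) r : formula :=
  [seq [seq l <- C | ~~ lsat r (lneg l)] | C <- F & ~~ has (lsat r) C].
Definition upd (r : var -> option bool) z c : var -> option bool :=
  fun w => if w == z then Some c else r w.

Lemma lsat_upd r z c m : r z = None ->
  lsat (upd r z c) m = lsat r m || (m == (c, z)).
Proof.
move=> Hz; case: m => d w; rewrite /lsat /upd /=.
case: (w =P z) => [->|/eqP ne]; first by rewrite Hz xpair_eqE eqxx andbT /= eq_sym.
by rewrite xpair_eqE (negbTE ne) andbF orbF.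
Qed.

Lemma mem_assignV F r C : C \in assignV F r ->
  exists2 C0, C0 \in F & ~~ has (lsat r) C0 /\ C = [seq l <- C0 | ~~ lsat r (lneg l)].
Proof. by case/mapP => C0; rewrite mem_filter => /andP[h1 h2] ->; exists C0. Qed.

Lemma in_assignV F r C0 : C0 \in F -> ~~ has (lsat r) C0 ->
  [seq l <- C0 | ~~ lsat r (lneg l)] \in assignV F r.
Proof. by move=> h1 h2; apply: map_f; rewrite mem_filter h2. Qed.

Lemma assignV_cat F1 F2 r : assignV (F1 ++ F2) r = assignV F1 r ++ assignV F2 r.
Proof. by rewrite /assignV filter_cat map_cat. Qed.

Lemma assignV0 F : assignV F (fun _ => None) = F.
Proof.
rewrite /assignV (eq_filter (a2 := predT)); last by move=> C; apply/hasPn.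
rewrite filter_predT (eq_map (g := id)) ?map_id // => C.
by rewrite (eq_filter (a2 := predT)) ?filter_predT.
Qed.

Lemma lneg_eq m l : (lneg m == l) = (m == lneg l).
Proof. by case: m l => [d w] [e u]; rewrite /lneg /= !xpair_eqE; case: d; case: e. Qed.

Lemma assignV_step F r z c : r z = None ->
  assign (assignV F r) [:: (c, z)] = assignV F (upd r z c).
Proof.
move=> Hz.
rewrite /assign /assignV filter_map -map_comp -filter_predI.
have E1 : forall C, (~~ has (fun m => m \in [:: (c, z)]) [seq l <- C | ~~ lsat r (lneg l)]
                    && ~~ has (lsat r) C) = ~~ has (lsat (upd r z c)) C.
  elim=> //= m C IH; rewrite lsat_upd //.
  case: ifP => h /=; rewrite !negb_or -IH ?mem_seq1.
    by rewrite /=; case: (m == _); case: (lsat r m); case: (has _ _); case: (has _ _).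
  case: (m =P (c, z)) => [E|]; last by rewrite /= andbT; case: (lsat r m); case: (has _ _); case: (has _ _).
  by move: h; rewrite E /lsat /= Hz.
rewrite (eq_filter E1); apply: eq_map => C /=.
rewrite -filter_predI; apply: eq_filter => m /=.
by rewrite lsat_upd // in_cons in_nil orbF negb_or andbC.
Qed.

Lemma mem_assignV_lit F r C m : C \in assignV F r -> m \in C ->
  ~~ lsat r m /\ ~~ lsat r (lneg m).
Proof.
case/mem_assignV => C0 _ [hn ->]; rewrite mem_filter => /andP[h1 h2]; split=> //.
by move/hasPn: hn; apply.
Qed.

Lemma assignV_id F r z c c0 : r z = Some c0 ->
  assign (assignV F r) [:: (c, z)] = assignV F r.
Proof.
move=> Hz; rewrite /assign.
have H : forall C m, C \in assignV F r -> m \in C -> (m != (c, z)) && (lneg m != (c, z)).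
  move=> C m hC hm; have [h1 h2] := mem_assignV_lit hC hm.
  move: h1 h2; case: m {hm} => d w; rewrite /lsat /lneg /= !xpair_eqE.
  case: (w =P z) => [->|]; rewrite ?andbF // Hz !andbT.
  by clear Hz; case: c0; case: d; case: c.
rewrite (eq_in_filter (a2 := predT)); last first.
  move=> C hC /=; apply/hasPn => m hm; rewrite in_cons in_nil orbF.
  by have /andP[] := H C m hC hm.
rewrite filter_predT -[RHS]map_id; apply/eq_in_map => C hC.
rewrite -[RHS]filter_predT; apply/eq_in_filter => m hm.
by rewrite in_cons in_nil orbF; have /andP[] := H C m hC hm.
Qed.

Lemma UP_conf k F : [::] \in F -> UP_fuel k F = F.
Proof. by case: k => //= k ->. Qed.
Lemma UP_fix k F : [::] \notin F -> unit_lit F = None -> UP_fuel k F = F.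
Proof. by case: k => //= k /negbTE -> ->. Qed.
Lemma UP_step k F l : [::] \notin F -> unit_lit F = Some l ->
  UP_fuel k.+1 F = UP_fuel k (assign F [:: l]).
Proof. by move=> /negbTE /= -> ->. Qed.

Lemma filter_unit_nil (F : formula) : (forall C, C \in F -> size C != 1) ->
  [seq C <- F | size C == 1] = [::].
Proof.
move=> H; have : ~~ has (fun C : seq (bool * nat) => size C == 1) F by apply/hasPn => C /H /negbTE ->.
by rewrite has_filter negbK => /eqP.
Qed.

Lemma unit_none (F : formula) : (forall C, C \in F -> size C != 1) -> unit_lit F = None.
Proof. by move=> H; rewrite /unit_lit filter_unit_nil. Qed.

Lemma unit_cat (F1 F2 : formula) : (forall C, C \in F1 -> size C != 1) ->
  unit_lit (F1 ++ F2) = unit_lit F2.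
Proof. by move=> H; rewrite /unit_lit filter_cat filter_unit_nil. Qed.

Lemma unit_first (F1 F2 : formula) l : (forall C, C \in F1 -> size C == 1 -> C = [:: l]) ->
  [:: l] \in F1 -> unit_lit (F1 ++ F2) = Some l.
Proof.
move=> H hl; rewrite /unit_lit filter_cat.
have : [:: l] \in [seq C <- F1 | size C == 1] by rewrite mem_filter hl.
have : forall C, C \in [seq C <- F1 | size C == 1] -> C = [:: l].
  by move=> C; rewrite mem_filter => /andP[h1 h2]; apply: H.
case: [seq C <- F1 | size C == 1] => // C s H2 _.
by rewrite (H2 C) ?mem_head.
Qed.

Lemma UP_conf_in k F : [::] \in F -> [::] \in UP_fuel k F.
Proof. by move=> h; rewrite UP_conf. Qed.

Section Main.
Variables (n : nat) (xs vs : seq var) (y a b : var).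
Hypotheses (Hxs : size xs = n) (Hvs : size vs = n)
  (Hu : uniq (xs ++ [:: y; a; b] ++ vs)).

Notation X i := (nth 0 xs i).
Notation W i := (nth 0 vs i).

Lemma uxs : uniq xs. Proof. by move: Hu; rewrite cat_uniq => /and3P[]. Qed.
Lemma uvs : uniq vs. Proof. by move: Hu; rewrite !cat_uniq => /and3P[_ _ /and3P[]]. Qed.
Lemma nxs w : w \in [:: y; a; b] ++ vs -> w \notin xs.
Proof.
move: Hu; rewrite cat_uniq => /and3P[_ /hasPn H _] hw; exact: H.
Qed.
Lemma nvs w : w \in [:: y; a; b] -> w \notin vs.
Proof.
move: Hu; rewrite !cat_uniq => /and3P[_ _ /and3P[_ /hasPn H _]] hw.
by apply/negP => /H; rewrite hw.
Qed.
Lemma yab : [&& y != a, y != b & a != b].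
Proof.
move: Hu; rewrite !cat_uniq => /and3P[_ _ /and3P[/= + _ _]].
by rewrite /= !inE; case: (y == a); case: (y == b); case: (a == b).
Qed.

Lemma Xin i : i < n -> X i \in xs. Proof. by move=> h; rewrite mem_nth ?Hxs. Qed.
Lemma Win i : i < n -> W i \in vs. Proof. by move=> h; rewrite mem_nth ?Hvs. Qed.

Lemma eqXX i j : i < n -> j < n -> (X i == X j) = (i == j).
Proof. by move=> hi hj; rewrite nth_uniq ?Hxs // uxs. Qed.
Lemma eqWW i j : i < n -> j < n -> (W i == W j) = (i == j).
Proof. by move=> hi hj; rewrite nth_uniq ?Hvs // uvs. Qed.

Lemma notX w i : w \in [:: y; a; b] ++ vs -> i < n -> (w == X i) = false.
Proof. by move=> hw hi; apply/eqP => E; have := nxs hw; rewrite E Xin. Qed.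
Lemma notW w i : w \in [:: y; a; b] -> i < n -> (w == W i) = false.
Proof. by move=> hw hi; apply/eqP => E; have := nvs hw; rewrite E Win. Qed.

Lemma eqWX i j : i < n -> j < n -> (W i == X j) = false.
Proof. by move=> hi hj; rewrite notX // mem_cat Win ?orbT. Qed.
Lemma eqXW i j : i < n -> j < n -> (X i == W j) = false.
Proof. by move=> hi hj; rewrite eq_sym eqWX. Qed.
Lemma eqyX i : i < n -> (y == X i) = false. Proof. by apply: notX; rewrite !inE eqxx. Qed.
Lemma eqaX i : i < n -> (a == X i) = false. Proof. by apply: notX; rewrite !inE eqxx !orbT. Qed.
Lemma eqbX i : i < n -> (b == X i) = false. Proof. by apply: notX; rewrite !inE eqxx !orbT. Qed.
Lemma eqyW i : i < n -> (y == W i) = false. Proof. by apply: notW; rewrite !inE eqxx. Qed.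
Lemma eqaW i : i < n -> (a == W i) = false. Proof. by apply: notW; rewrite !inE eqxx !orbT. Qed.
Lemma eqbW i : i < n -> (b == W i) = false. Proof. by apply: notW; rewrite !inE eqxx !orbT. Qed.
Lemma eqXy i : i < n -> (X i == y) = false. Proof. by move=> h; rewrite eq_sym eqyX. Qed.
Lemma eqWy i : i < n -> (W i == y) = false. Proof. by move=> h; rewrite eq_sym eqyW. Qed.
Lemma eqXa i : i < n -> (X i == a) = false. Proof. by move=> h; rewrite eq_sym eqaX. Qed.
Lemma eqWa i : i < n -> (W i == a) = false. Proof. by move=> h; rewrite eq_sym eqaW. Qed.
Lemma eqXb i : i < n -> (X i == b) = false. Proof. by move=> h; rewrite eq_sym eqbX. Qed.
Lemma eqWb i : i < n -> (W i == b) = false. Proof. by move=> h; rewrite eq_sym eqbW. Qed.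
Lemma eqya : (y == a) = false. Proof. by case/and3P: yab => /negbTE. Qed.
Lemma eqyb : (y == b) = false. Proof. by case/and3P: yab => _ /negbTE. Qed.
Lemma eqab : (a == b) = false. Proof. by case/and3P: yab => _ _ /negbTE. Qed.
Lemma eqay : (a == y) = false. Proof. by rewrite eq_sym eqya. Qed.
Lemma eqby : (b == y) = false. Proof. by rewrite eq_sym eqyb. Qed.
Lemma eqba : (b == a) = false. Proof. by rewrite eq_sym eqab. Qed.

Definition PA : formula := [seq [:: pos x; neg a; neg b] | x <- xs].
Definition PY : formula := [:: [:: pos y; neg a; neg b]; [:: neg y; neg a; neg b]].
Definition PB : formula := [seq [:: neg (X i); pos (W i)] | i <- iota 0 n].
Definition PC : formula := [seq [:: pos (X i); pos (W i)] | i <- iota 0 n].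
Definition PD : formula := [:: rcons [seq neg v | v <- vs] (pos a); rcons [seq neg v | v <- vs] (pos b)].

Lemma Vn_split : Vn xs vs y a b = PA ++ PY ++ PB ++ PC ++ PD.
Proof. by rewrite /Vn /cX map_cat -map_comp -catA Hxs. Qed.

Inductive Vn_spec (C : clause) : Prop :=
| VA i of i < n & C = [:: pos (X i); neg a; neg b]
| VY1 of C = [:: pos y; neg a; neg b]
| VY2 of C = [:: neg y; neg a; neg b]
| VB i of i < n & C = [:: neg (X i); pos (W i)]
| VC i of i < n & C = [:: pos (X i); pos (W i)]
| VDa of C = rcons [seq neg v | v <- vs] (pos a)
| VDb of C = rcons [seq neg v | v <- vs] (pos b).

Lemma Vn_cases C : C \in Vn xs vs y a b -> Vn_spec C.
Proof.
rewrite Vn_split !mem_cat => /or4P[| | |/orP[]].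
- case/mapP => x hx ->; apply: (@VA _ (index x xs)); first by rewrite -Hxs index_mem.
  by rewrite nth_index.
- by rewrite !inE => /orP[]/eqP ->; [apply: VY1 | apply: VY2].
- by case/mapP => i; rewrite mem_iota => /andP[_ hi] ->; apply: (VB hi).
- by case/mapP => i; rewrite mem_iota => /andP[_ hi] ->; apply: (VC hi).
- by rewrite !inE => /orP[]/eqP ->; [apply: VDa | apply: VDb].
Qed.


Definition FF r := assignV (Vn xs vs y a b) r.

Lemma Dfilter r i : i < n ->
  [seq l <- [seq neg v | v <- vs] | ~~ lsat r (lneg l)] = [::] -> r (W i) = Some true.
Proof.
move=> hi E; apply/eqP; apply/negPn/negP => h.
have : neg (W i) \in [seq l <- [seq neg v | v <- vs] | ~~ lsat r (lneg l)].
  by rewrite mem_filter /lsat /= h map_f ?Win.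
by rewrite E.
Qed.

Lemma small r C : C \in FF r -> r a = None -> r b = None ->
  (forall i, i < n -> r (W i) != Some false) -> size C <= 1 ->
  (exists2 i, i < n & [/\ C = [:: pos (W i)], r (W i) = None & r (X i) != None])
  \/ (forall i, i < n -> r (W i) = Some true).
Proof.
move=> hC Ha Hb HW.
case/mem_assignV: hC => C0 hC0 [hk ->].
move: hk; case: (Vn_cases hC0) => [i hi ->| -> | -> | i hi -> | i hi -> | -> | ->];
  rewrite /lsat /= ?Ha ?Hb /=.
- by case: ifP.
- by case: ifP.
- by case: ifP.
- move: (HW i hi); case E1: (r (X i)) => [[]|]; case E2: (r (W i)) => [[]|] //= _ _ _.
  by left; exists i => //; rewrite E1 E2.
- move: (HW i hi); case E1: (r (X i)) => [[]|]; case E2: (r (W i)) => [[]|] //= _ _ _.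
  by left; exists i => //; rewrite E1 E2.
- rewrite filter_rcons /lsat /= Ha /= size_rcons ltnS leqn0 => _ /nilP E.
  by right => i hi; apply: Dfilter.
- rewrite filter_rcons /lsat /= Hb /= size_rcons ltnS leqn0 => _ /nilP E.
  by right => i hi; apply: Dfilter.
Qed.


Definition Pre : formula := PA ++ PY ++ PB ++ PC.

Lemma FF_split r : FF r = assignV Pre r ++ assignV PD r.
Proof. by rewrite /FF Vn_split /Pre !catA assignV_cat. Qed.

Inductive Pre_spec (C : clause) : Prop :=
| PrA i of i < n & C = [:: pos (X i); neg a; neg b]
| PrY1 of C = [:: pos y; neg a; neg b]
| PrY2 of C = [:: neg y; neg a; neg b]
| PrB i of i < n & C = [:: neg (X i); pos (W i)]
| PrC i of i < n & C = [:: pos (X i); pos (W i)].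

Lemma Pre_cases C : C \in Pre -> Pre_spec C.
Proof.
rewrite /Pre !mem_cat => /or4P[].
- case/mapP => x hx ->; apply: (@PrA _ (index x xs)); first by rewrite -Hxs index_mem.
  by rewrite nth_index.
- by rewrite !inE => /orP[]/eqP ->; [apply: PrY1 | apply: PrY2].
- by case/mapP => i; rewrite mem_iota => /andP[_ hi] ->; apply: (PrB hi).
- by case/mapP => i; rewrite mem_iota => /andP[_ hi] ->; apply: (PrC hi).
Qed.

Lemma PA_in i : i < n -> [:: pos (X i); neg a; neg b] \in Pre.
Proof. by move=> hi; rewrite /Pre mem_cat map_f ?Xin. Qed.
Lemma PY1_in : [:: pos y; neg a; neg b] \in Pre.
Proof. by rewrite /Pre !mem_cat !inE eqxx !orbT. Qed.
Lemma PY2_in : [:: neg y; neg a; neg b] \in Pre.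
Proof. by rewrite /Pre !mem_cat !inE eqxx !orbT. Qed.
Lemma PB_in i : i < n -> [:: neg (X i); pos (W i)] \in Pre.
Proof.
by move=> hi; rewrite /Pre !mem_cat (map_f (fun i => [:: neg (X i); pos (W i)])) ?orbT // mem_iota.
Qed.
Lemma PC_in i : i < n -> [:: pos (X i); pos (W i)] \in Pre.
Proof.
by move=> hi; rewrite /Pre !mem_cat (map_f (fun i => [:: pos (X i); pos (W i)])) ?orbT // mem_iota.
Qed.

Lemma small_pre r C : C \in assignV Pre r -> r a = None -> r b = None ->
  (forall i, i < n -> r (W i) != Some false) -> size C <= 1 ->
  exists2 i, i < n & [/\ C = [:: pos (W i)], r (W i) = None & r (X i) != None].
Proof.
move=> hC Ha Hb HW.
case/mem_assignV: hC => C0 hC0 [hk ->].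
move: hk; case: (Pre_cases hC0) => [i hi ->| -> | -> | i hi -> | i hi -> ];
  rewrite /lsat /= ?Ha ?Hb /=.
- by case: ifP.
- by case: ifP.
- by case: ifP.
- move: (HW i hi); case E1: (r (X i)) => [[]|]; case E2: (r (W i)) => [[]|] //= _ _ _.
  by exists i => //; rewrite E1 E2.
- move: (HW i hi); case E1: (r (X i)) => [[]|]; case E2: (r (W i)) => [[]|] //= _ _ _.
  by exists i => //; rewrite E1 E2.
Qed.

Lemma negs_nil r : (forall i, i < n -> r (W i) = Some true) ->
  [seq l <- [seq neg v | v <- vs] | ~~ lsat r (lneg l)] = [::].
Proof.
move=> H; rewrite (eq_in_filter (a2 := pred0)) ?filter_pred0 //.
move=> l /mapP [v hv ->]; rewrite /lsat /= -(nth_index 0 hv) H //.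
by rewrite -Hvs index_mem.
Qed.

Lemma negs_keep r x : r x <> Some true -> (forall i, i < n -> r (W i) != Some false) ->
  ~~ has (lsat r) (rcons [seq neg v | v <- vs] (pos x)).
Proof.
move=> Hx H; rewrite has_rcons negb_or /lsat /=; apply/andP; split.
  by apply/eqP.
apply/hasPn => l /mapP [v hv ->]; rewrite /= -(nth_index 0 hv) H //.
by rewrite -Hvs index_mem.
Qed.

Lemma negs_size r : (exists2 i, i < n & r (W i) = None) ->
  0 < size [seq l <- [seq neg v | v <- vs] | ~~ lsat r (lneg l)].
Proof.
case=> i hi E; rewrite lt0n size_eq0; apply/eqP => E2.
have : neg (W i) \in [seq l <- [seq neg v | v <- vs] | ~~ lsat r (lneg l)].
  by rewrite mem_filter /lsat /= E map_f ?Win.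
by rewrite E2.
Qed.

Definition Closed (r : var -> option bool) := [/\ r a = None, r b = None &
  forall i, i < n -> r (W i) = if r (X i) is Some _ then Some true else None].
Definition unas (r : var -> option bool) := count (fun i => r (X i) == None) (iota 0 n).

Lemma closed_W r : Closed r -> forall i, i < n -> r (W i) != Some false.
Proof. by case=> _ _ H i hi; rewrite H //; case: (r (X i)). Qed.

Lemma closed_PD r : Closed r -> (exists2 i, i < n & r (X i) = None) ->
  forall C, C \in assignV PD r -> 1 < size C.
Proof.
move=> [Ha Hb Hc] [j hj Ej] C.
have HW := closed_W (And3 Ha Hb Hc).
case/mem_assignV => C0; rewrite !inE => /orP[]/eqP -> [_ ->];
  rewrite filter_rcons /lsat /= ?Ha ?Hb /= size_rcons ltnS; apply: negs_size => //;
  by exists j => //; rewrite Hc // Ej.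
Qed.

Lemma closed_big r C : Closed r -> 0 < unas r -> C \in FF r -> 1 < size C.
Proof.
move=> Hcl hu; have HW := closed_W Hcl; case: Hcl => Ha Hb Hc.
have [j hj Ej] : exists2 j, j < n & r (X j) = None.
  move: hu; rewrite -has_count => /hasP [j]; rewrite mem_iota => /andP[_ hj] /eqP E.
  by exists j.
rewrite FF_split mem_cat => /orP[] hC; last by apply: (closed_PD (And3 Ha Hb Hc)) => //; exists j.
rewrite ltnNge; apply/negP => hs.
case: (small_pre hC Ha Hb HW hs) => i hi [_ E1 E2].
by move: (Hc i hi) E2; rewrite E1; case: (r (X i)).
Qed.

Lemma closed_fix r k : Closed r -> 0 < unas r -> UP_fuel k (FF r) = FF r.
Proof.
move=> Hc hu; apply: UP_fix.
  by apply/negP => /(closed_big Hc hu).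
by apply: unit_none => C /(closed_big Hc hu); case: (size C) => // [[]].
Qed.


Lemma unas0 r : unas r = 0 -> forall i, i < n -> r (X i) != None.
Proof.
move=> H i hi; apply/negP => /eqP E.
have : 0 < unas r by rewrite -has_count; apply/hasP; exists i; rewrite ?mem_iota ?E.
by rewrite H.
Qed.

Lemma closed_y r c : Closed r -> r y = None ->
  Closed (upd r y c) /\ unas (upd r y c) = unas r.
Proof.
case=> Ha Hb Hc Hy; split.
  split; rewrite /upd ?eqay ?eqby // => i hi.
  by rewrite (eqWy hi) (eqXy hi) Hc.
by apply: eq_in_count => i; rewrite mem_iota => /andP[_ hi]; rewrite /upd (eqXy hi).
Qed.

Lemma closed_x r j c : Closed r -> j < n -> r (X j) = None ->
  Closed (upd (upd r (X j) c) (W j) true) /\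
  unas (upd (upd r (X j) c) (W j) true) = (unas r).-1.
Proof.
case=> Ha Hb Hc hj Ej; split.
  split; rewrite /upd ?(eqaW hj) ?(eqbW hj) ?(eqaX hj) ?(eqbX hj) // => i hi.
  rewrite (eqWW hi hj) (eqWX hi hj) (eqXW hi hj) (eqXX hi hj).
  by case: (i =P j) => // _; rewrite Hc.
rewrite /unas.
have -> : count (fun i => upd (upd r (X j) c) (W j) true (X i) == None) (iota 0 n)
        = count (predI (fun i => r (X i) == None) (predC1 j)) (iota 0 n).
  apply: eq_in_count => i; rewrite mem_iota => /andP[_ hi].
  rewrite /upd (eqXW hi hj) (eqXX hi hj) /=.
  by case: (i =P j) => [->|]; rewrite ?eqxx ?andbF ?andbT.
set s := [seq i <- iota 0 n | r (X i) == None].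
have -> : count (predI (fun i => r (X i) == None) (predC1 j)) (iota 0 n) = count (predC1 j) s.
  by rewrite /s count_filter; apply: eq_count => i; rewrite /= andbC.
have hjs : j \in s by rewrite mem_filter Ej eqxx mem_iota.
have us : uniq s by rewrite filter_uniq // iota_uniq.
have := count_predC (pred1 j) s; rewrite (count_uniq_mem _ us) hjs.
rewrite /s size_filter => <-; by rewrite add1n.
Qed.

Lemma PD_big r : r a = None -> r b = None ->
  (forall i, i < n -> r (W i) != Some false) -> (exists2 i, i < n & r (W i) = None) ->
  forall C, C \in assignV PD r -> 1 < size C.
Proof.
move=> Ha Hb HW Hex C.
case/mem_assignV => C0; rewrite !inE => /orP[]/eqP -> [_ ->];
  by rewrite filter_rcons /lsat /= ?Ha ?Hb /= size_rcons ltnS; apply: negs_size.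
Qed.

Lemma two_elems (T : eqType) (s : seq T) x1 x2 : x1 \in s -> x2 \in s -> x1 != x2 -> 1 < size s.
Proof. by case: s => [|z [|w s]] //; rewrite !inE => /eqP -> /eqP ->; rewrite eqxx. Qed.

Lemma x_step r j c : Closed r -> j < n -> r (X j) = None ->
  [/\ [::] \notin FF (upd r (X j) c),
      unit_lit (FF (upd r (X j) c)) = Some (pos (W j)),
      4 <= size (FF (upd r (X j) c)) &
      assign (FF (upd r (X j) c)) [:: pos (W j)] = FF (upd (upd r (X j) c) (W j) true)].
Proof.
move=> Hcl hj Ej; have HW := closed_W Hcl; case: Hcl => Ha Hb Hc.
set r1 := upd r (X j) c.
have Ha1 : r1 a = None by rewrite /r1 /upd (eqaX hj).
have Hb1 : r1 b = None by rewrite /r1 /upd (eqbX hj).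
have HW1 : forall i, i < n -> r1 (W i) = r (W i) by move=> i hi; rewrite /r1 /upd (eqWX hi hj).
have HX1 : forall i, i < n -> r1 (X i) = if i == j then Some c else r (X i).
  by move=> i hi; rewrite /r1 /upd (eqXX hi hj).
have Wj : r1 (W j) = None by rewrite HW1 // Hc // Ej.
have HW1' : forall i, i < n -> r1 (W i) != Some false by move=> i hi; rewrite HW1 // HW.
have Hsm : forall C, C \in FF r1 -> size C <= 1 -> C = [:: pos (W j)].
  move=> C; rewrite FF_split mem_cat => /orP[] hC hs; last first.
    by move: hs; rewrite leqNgt (PD_big Ha1 Hb1 HW1' _ hC) //; exists j.
  case: (small_pre hC Ha1 Hb1 HW1' hs) => i hi [-> E1 E2].
  case: (i =P j) => [-> //|/eqP ne].
  by move: E1 E2; rewrite HX1 // HW1 // Hc // (negbTE ne); case: (r (X i)).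
have Hin : [:: pos (W j)] \in assignV (PB ++ PC) r1.
  case: c @r1 Ha1 Hb1 HW1 HX1 Wj HW1' Hsm => r1 Ha1 Hb1 HW1 HX1 Wj HW1' Hsm.
  - have -> : [:: pos (W j)] = [seq l <- [:: neg (X j); pos (W j)] | ~~ lsat r1 (lneg l)].
      by rewrite /lsat /= HX1 // eqxx Wj.
    apply: in_assignV; first by rewrite mem_cat (map_f (fun i => [:: neg (X i); pos (W i)])) // mem_iota.
    by rewrite /lsat /= HX1 // eqxx Wj.
  - have -> : [:: pos (W j)] = [seq l <- [:: pos (X j); pos (W j)] | ~~ lsat r1 (lneg l)].
      by rewrite /lsat /= HX1 // eqxx Wj.
    apply: in_assignV; first by rewrite mem_cat (map_f (fun i => [:: pos (X i); pos (W i)])) ?orbT // mem_iota.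
    by rewrite /lsat /= HX1 // eqxx Wj.
have HinF : [:: pos (W j)] \in FF r1.
  rewrite /FF Vn_split !assignV_cat !mem_cat; move: Hin.
  by rewrite assignV_cat mem_cat => /orP[] ->; rewrite !orbT.
split.
- by apply/negP => /Hsm /(_ isT).
- rewrite -(cats0 (FF r1)); apply: unit_first => // C hC /eqP h.
  by apply: Hsm; rewrite ?h.
- rewrite /FF Vn_split !assignV_cat !size_cat.
  have h1 : 0 < size (assignV PY r1).
    by rewrite /assignV /PY /lsat /= Ha1 Hb1 /=; case: (r1 y) => [[]|].
  have h2 : 0 < size (assignV PB r1) + size (assignV PC r1).
    by rewrite -size_cat -assignV_cat; case: (assignV _ _) Hin.
  have h3 : size (assignV PD r1) = 2.
    rewrite /assignV /PD /= (negs_keep (x := a)) ?Ha1 // (negs_keep (x := b)) ?Hb1 //.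
  lia.
- exact: assignV_step.
Qed.


Lemma FF_split5 r : FF r =
  assignV PA r ++ assignV PY r ++ assignV PB r ++ assignV PC r ++ assignV PD r.
Proof. by rewrite /FF Vn_split !assignV_cat. Qed.

Lemma PA_nil r : (forall i, i < n -> r (X i) = Some true) -> assignV PA r = [::].
Proof.
move=> H; rewrite /assignV (eq_in_filter (a2 := pred0)) ?filter_pred0 //.
move=> C /mapP [x hx ->] /=; rewrite /lsat /= -(nth_index 0 hx) H //.
by rewrite -Hxs index_mem.
Qed.

Lemma PB_nil r : (forall i, i < n -> r (W i) = Some true) -> assignV PB r = [::].
Proof.
move=> H; rewrite /assignV (eq_in_filter (a2 := pred0)) ?filter_pred0 //.
move=> C /mapP [i]; rewrite mem_iota => /andP[_ hi] -> /=.
by rewrite /lsat /= H // orbT.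
Qed.

Lemma PC_nil r : (forall i, i < n -> r (W i) = Some true) -> assignV PC r = [::].
Proof.
move=> H; rewrite /assignV (eq_in_filter (a2 := pred0)) ?filter_pred0 //.
move=> C /mapP [i]; rewrite mem_iota => /andP[_ hi] -> /=.
by rewrite /lsat /= H // orbT.
Qed.

Lemma PD_in1 r : r a = Some true -> r b = None ->
  (forall i, i < n -> r (W i) = Some true) -> assignV PD r = [:: [:: pos b]].
Proof.
move=> Ha Hb HW.
have La : lsat r (pos a) by rewrite /lsat Ha.
have HW' : forall i, i < n -> r (W i) != Some false by move=> i hi; rewrite HW.
rewrite /assignV /PD /= has_rcons La /= (negs_keep (x := b)) ?Hb //=.
by rewrite filter_rcons negs_nil // /lsat /= Hb.
Qed.

Lemma PD_nil r : r a = Some true -> r b = Some true -> assignV PD r = [::].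
Proof.
move=> Ha Hb.
have La : lsat r (pos a) by rewrite /lsat Ha.
have Lb : lsat r (pos b) by rewrite /lsat Hb.
by rewrite /assignV /PD /= !has_rcons La Lb.
Qed.

Lemma final r k : Closed r -> unas r = 0 -> 3 <= k -> [::] \in UP_fuel k (FF r).
Proof.
move=> Hcl hu hk; have HX := unas0 hu; case: Hcl => Ha Hb Hc.
have HWt : forall i, i < n -> r (W i) = Some true.
  by move=> i hi; rewrite Hc //; case: (r (X i)) (HX i hi).
have HWf : forall i, i < n -> r (W i) != Some false by move=> i hi; rewrite HWt.
have Hpre : forall C, C \in assignV Pre r -> 1 < size C.
  move=> C hC; rewrite ltnNge; apply/negP => hs.
  by case: (small_pre hC Ha Hb HWf hs) => i hi [_]; rewrite HWt.
have HD : assignV PD r = [:: [:: pos a]; [:: pos b]].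
  rewrite /assignV /PD /= (negs_keep (x := a)) ?Ha // (negs_keep (x := b)) ?Hb //=.
  by rewrite !filter_rcons negs_nil // /lsat /= Ha Hb.
have n0 : [::] \notin FF r.
  rewrite FF_split HD mem_cat negb_or !inE /= andbT.
  by apply/negP => /Hpre.
have u0 : unit_lit (FF r) = Some (pos a).
  rewrite FF_split HD unit_cat //.
  by move=> C /Hpre; case: (size C) => // [[]].
case: k hk => [|[|[|k]]] // _.
rewrite (UP_step _ n0 u0) /FF (assignV_step _ _ Ha) -/(FF _).
set r3 := upd r a true.
have Ha3 : r3 a = Some true by rewrite /r3 /upd eqxx.
have Hb3 : r3 b = None by rewrite /r3 /upd eqba.
have Hy3 : r3 y = r y by rewrite /r3 /upd eqya.
have HX3 : forall i, i < n -> r3 (X i) = r (X i) by move=> i hi; rewrite /r3 /upd (eqXa hi).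
have HW3 : forall i, i < n -> r3 (W i) = Some true by move=> i hi; rewrite /r3 /upd (eqWa hi) HWt.
have HD3 : assignV PD r3 = [:: [:: pos b]] by apply: PD_in1.
have Hcl3 : forall C, C \in assignV Pre r3 -> C = [:: neg b] \/ 1 < size C.
  move=> C /mem_assignV [C0 hC0 [hk ->]]; move: hk.
  case: (Pre_cases hC0) => [i hi ->| -> | -> | i hi -> | i hi -> ];
    rewrite /lsat /= ?Ha3 ?Hb3 ?HW3 //= ?orbT //.
  - by case: ifP; [right | left].
  - by case: ifP; [right | left].
  - by case: ifP; [right | left].
case: (boolP ((r y != None) || has (fun i => r (X i) == Some false) (iota 0 n))) => hcase.
-
  have Hnb : [:: neg b] \in assignV Pre r3.
    case/orP: hcase => [|/hasP [i]]; last first.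
      rewrite mem_iota => /andP[_ hi] /eqP E.
      have -> : [:: neg b] = [seq l <- [:: pos (X i); neg a; neg b] | ~~ lsat r3 (lneg l)].
        by rewrite /lsat /= HX3 // E Ha3 Hb3.
      by apply: in_assignV; rewrite ?PA_in // /lsat /= HX3 // E Ha3 Hb3.
    case E : (r y) => [[]|] // _.
    + have -> : [:: neg b] = [seq l <- [:: neg y; neg a; neg b] | ~~ lsat r3 (lneg l)].
        by rewrite /lsat /= Hy3 E Ha3 Hb3.
      by apply: in_assignV; rewrite ?PY2_in // /lsat /= Hy3 E Ha3 Hb3.
    + have -> : [:: neg b] = [seq l <- [:: pos y; neg a; neg b] | ~~ lsat r3 (lneg l)].
        by rewrite /lsat /= Hy3 E Ha3 Hb3.
      by apply: in_assignV; rewrite ?PY1_in // /lsat /= Hy3 E Ha3 Hb3.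
  have n3 : [::] \notin FF r3.
    rewrite FF_split HD3 mem_cat negb_or !inE /= andbT.
    by apply/negP => /Hcl3 [].
  have u3 : unit_lit (FF r3) = Some (neg b).
    rewrite FF_split HD3; apply: unit_first => // C /Hcl3 [-> //|].
    by case: (size C) => // [[]].
  rewrite (UP_step _ n3 u3) /FF (assignV_step _ _ Hb3) -/(FF _); apply: UP_conf_in.
  set r4 := upd r3 b false.
  have Hb4 : r4 b = Some false by rewrite /r4 /upd eqxx.
  have HW4 : forall i, i < n -> r4 (W i) = Some true by move=> i hi; rewrite /r4 /upd (eqWb hi) HW3.
  rewrite FF_split mem_cat; apply/orP; right.
  have -> : [::] = [seq l <- rcons [seq neg v | v <- vs] (pos b) | ~~ lsat r4 (lneg l)].
    by rewrite filter_rcons negs_nil // /lsat /= Hb4.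
  apply: in_assignV; first by rewrite !inE eqxx orbT.
  by apply: negs_keep; rewrite ?Hb4 // => i hi; rewrite HW4.
-
  have Hy : r y = None by move: hcase; case: (r y).
  have HXt : forall i, i < n -> r (X i) = Some true.
    move=> i hi; move: hcase (HX i hi); rewrite negb_or => /andP[_ /hasPn /(_ i)].
    by rewrite mem_iota hi => /(_ isT); case: (r (X i)) => [[]|].
  have E3 : FF r3 = [:: [:: pos y; neg b]; [:: neg y; neg b]; [:: pos b]].
    rewrite FF_split5 PA_nil ?PB_nil ?PC_nil ?HD3 //.
      by rewrite /assignV /PY /lsat /= Hy3 Hy Ha3 Hb3 /= ?Hy3 ?Hy ?Ha3 ?Hb3.
    by move=> i hi; rewrite HX3 ?HXt.
  rewrite (@UP_step _ _ (pos b)) ?E3 // -E3 /FF (assignV_step _ _ Hb3) -/(FF _).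
  set r4 := upd r3 b true.
  have Ha4 : r4 a = Some true by rewrite /r4 /upd eqab.
  have Hb4 : r4 b = Some true by rewrite /r4 /upd eqxx.
  have Hy4 : r4 y = None by rewrite /r4 /upd eqyb Hy3.
  have HX4 : forall i, i < n -> r4 (X i) = Some true by move=> i hi; rewrite /r4 /upd (eqXb hi) HX3 ?HXt.
  have HW4 : forall i, i < n -> r4 (W i) = Some true by move=> i hi; rewrite /r4 /upd (eqWb hi) HW3.
  have E4 : FF r4 = [:: [:: pos y]; [:: neg y]].
    rewrite FF_split5 PA_nil ?PB_nil ?PC_nil ?PD_nil //.
    by rewrite /assignV /PY /lsat /= Hy4 Ha4 Hb4 /= ?Hy4 ?Ha4 ?Hb4.
  rewrite (@UP_step _ _ (pos y)) ?E4 // -E4 /FF (assignV_step _ _ Hy4) -/(FF _); apply: UP_conf_in.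
  set r5 := upd r4 y true.
  have Ha5 : r5 a = Some true by rewrite /r5 /upd eqay.
  have Hb5 : r5 b = Some true by rewrite /r5 /upd eqby.
  have Hy5 : r5 y = Some true by rewrite /r5 /upd eqxx.
  rewrite FF_split5 !mem_cat; apply/orP; right; apply/orP; left.
  by rewrite /assignV /PY /lsat /= Hy5 Ha5 Hb5 /= ?Hy5 ?Ha5 ?Hb5.
Qed.


Lemma child_x r j c : Closed r -> j < n -> r (X j) = None ->
  (0 < unas (upd (upd r (X j) c) (W j) true) ->
     U (assign (FF r) [:: (c, X j)]) = FF (upd (upd r (X j) c) (W j) true)) /\
  (unas (upd (upd r (X j) c) (W j) true) = 0 ->
     [::] \in U (assign (FF r) [:: (c, X j)])).
Proof.
move=> Hcl hj Ej.
have [Hcl2 _] := closed_x c Hcl hj Ej.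
have [n1 u1 s1 st] := x_step c Hcl hj Ej.
rewrite /FF (assignV_step _ _ Ej) -/(FF _) /U.
move: (size (FF (upd r (X j) c))) s1 => m.
case: m => [|[|[|[|m]]]] // _.
rewrite (UP_step _ n1 u1) st; split => hu.
  exact: closed_fix.
by apply: final.
Qed.

Lemma child_y r c : Closed r -> r y = None -> 0 < unas r ->
  U (assign (FF r) [:: (c, y)]) = FF (upd r y c).
Proof.
move=> Hcl Hy hu; have [Hcl2 hu2] := closed_y c Hcl Hy.
rewrite /FF (assignV_step _ _ Hy) -/(FF _) /U closed_fix //.
by rewrite hu2.
Qed.

Lemma child_as r x c c0 : r x = Some c0 ->
  U (assign (FF r) [:: (c, x)]) = U (FF r).
Proof. by move=> E; rewrite /FF (assignV_id _ _ E). Qed.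

Lemma lower F T : dmst (rcons xs y) F T ->
  forall r, F = FF r -> Closed r -> 2 ^ unas r - 1 <= bt_size T.
Proof.
elim=> {F T} [F h0 | F x T1 T2 h0 hx hv d1 IH1 d2 IH2] r EF Hcl; subst F.
  case: (posnP (unas r)) => [->//|hu].
  by move: h0; rewrite /U closed_fix // => /(closed_big Hcl hu).
case: (posnP (unas r)) => [->//|hu].
have UF : U (FF r) = FF r by rewrite /U closed_fix.
rewrite UF in d1 d2 IH1 IH2 |- * => /=.
case Ex : (r x) => [c0|].
  have := IH1 r; rewrite /neg (child_as _ Ex) UF => /(_ erefl Hcl).
  lia.
move: hx; rewrite mem_rcons inE => /orP[/eqP Exy|hxs].
  subst x.
  have [Hcl2 hu2] := closed_y false Hcl Ex.
  have := IH1 (upd r y false); rewrite /neg (child_y _ Hcl Ex hu) => /(_ erefl Hcl2).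
  rewrite hu2; lia.
set j := index x xs.
have hj : j < n by rewrite -Hxs index_mem.
have Exj : x = X j by rewrite nth_index.
rewrite Exj in Ex IH1 IH2 d1 d2 *.
have [Hcl2 hu2] := closed_x false Hcl hj Ex.
have [Hcl3 hu3] := closed_x true Hcl hj Ex.
case: (posnP (unas r).-1) => [h1|h1].
  by have -> : unas r = 1 by lia.
have [c1 _] := child_x false Hcl hj Ex.
have [c2 _] := child_x true Hcl hj Ex.
have := IH1 _ (c1 _) Hcl2; rewrite hu2 => /(_ h1) H1.
have := IH2 _ (c2 _) Hcl3; rewrite hu3 => /(_ h1) H2.
move: H1 H2; case: (unas r) hu h1 => // u _ _.
rewrite expnS /=; lia.
Qed.


Lemma X_vars r j : Closed r -> j < n -> r (X j) = None -> X j \in vars (FF r).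
Proof.
case=> Ha Hb Hc hj Ej.
have hC : [:: pos (X j); neg a; neg b] \in FF r.
  have -> : [:: pos (X j); neg a; neg b] =
    [seq l <- [:: pos (X j); neg a; neg b] | ~~ lsat r (lneg l)].
    by rewrite /lsat /= Ej Ha Hb.
  apply: in_assignV; last by rewrite /lsat /= Ej Ha Hb.
  by rewrite Vn_split mem_cat map_f ?Xin.
rewrite /vars; apply/flattenP; exists [seq l.2 | l <- [:: pos (X j); neg a; neg b]].
  exact: map_f.
by rewrite inE eqxx.
Qed.

Lemma upper u : forall r, Closed r -> unas r = u.+1 ->
  exists T, dmst (rcons xs y) (FF r) T /\ bt_size T = 2 ^ u.+1 - 1.
Proof.
elim: u => [|u IH] r Hcl hu.
all: have : 0 < unas r by rewrite hu.
all: rewrite /unas -has_count => /hasP [j]; rewrite mem_iota => /andP[_ hj] /eqP Ej.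
all: have hu' : 0 < unas r by rewrite hu.
all: have UF : U (FF r) = FF r by rewrite /U closed_fix.
all: have [Hcl2 hu2] := closed_x false Hcl hj Ej.
all: have [Hcl3 hu3] := closed_x true Hcl hj Ej.
all: have [c1 c1'] := child_x false Hcl hj Ej.
all: have [c2 c2'] := child_x true Hcl hj Ej.
all: have n0 : [::] \notin U (FF r) by rewrite UF; apply/negP => /(closed_big Hcl hu').
all: have xB : X j \in rcons xs y by rewrite mem_rcons inE Xin ?orbT.
all: have xv : X j \in vars (U (FF r)) by rewrite UF X_vars.
- exists (Node (X j) Leaf Leaf); split => //.
  apply: dmst_node => //; rewrite UF; apply: dmst_leaf; apply: UP_conf_in.
    by apply: c1'; rewrite hu2 hu.
  by apply: c2'; rewrite hu3 hu.
- have [T1 [d1 s1]] := IH _ Hcl2 (etrans hu2 (congr1 predn hu)).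
  have [T2 [d2 s2]] := IH _ Hcl3 (etrans hu3 (congr1 predn hu)).
  exists (Node (X j) T1 T2); split.
    apply: dmst_node => //; rewrite UF.
      by rewrite /neg c1 // hu2 hu.
    by rewrite /pos c2 // hu3 hu.
  rewrite /= s1 s2 (expnS 2 u.+1).
  have : 0 < 2 ^ u.+1 by rewrite expn_gt0.
  lia.
Qed.

End Main.

Theorem corollary4 (n : nat) (xs vs : seq var) (y a b : var) :
  size xs = n -> size vs = n ->
  uniq (xs ++ [:: y; a; b] ++ vs) ->
  (exists T, dmst (rcons xs y) (Vn xs vs y a b) T /\ bt_size T = 2 ^ n - 1) /\
  (forall T, dmst (rcons xs y) (Vn xs vs y a b) T -> 2 ^ n - 1 <= bt_size T).
Proof.
move=> Hxs Hvs Hu.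
pose r0 : var -> option bool := fun _ => None.
have E0 : Vn xs vs y a b = FF xs vs y a b r0 by rewrite /FF assignV0.
have Hcl0 : Closed n xs vs a b r0 by split.
have hu0 : unas n xs r0 = n.
  by rewrite /unas (eq_count (a2 := predT)) ?count_predT ?size_iota.
split; last first.
  move=> T d; have := lower Hxs Hvs Hu d E0 Hcl0; by rewrite hu0.
case: n Hxs Hvs Hcl0 hu0 => [|u] Hxs Hvs Hcl0 hu0.
  exists Leaf; split => //; apply: dmst_leaf; rewrite E0 /U.
  apply: (final Hxs Hvs Hu Hcl0 hu0).
  by move/size0nil: Hxs => ->; move/size0nil: Hvs => ->.
have [T [d s]] := upper Hxs Hvs Hu Hcl0 hu0.
by exists T; rewrite E0.
Qed.
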